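(* Let $p$ be a prime, $d \geq 1$, $V = \mathbb{F}_p^d$, let $G \leq \mathrm{GL}(V)$ be an irreducible linear group on $V$, and let $\Delta \subseteq V$ be a $G$-invariant subset. If for some integer $m \geq 1$ the sumset $m \cdot \Delta$ contains a line $b + \mathbb{F}_p v = \{ b + \lambda v \mid \lambda \in \mathbb{F}_p\}$ for some $b \in V$ and nonzero $v \in V$, then $dm \cdot \Delta = V$.
   Context: For a subset $\Delta \subseteq V$ and a positive integer $n$, $n \cdot \Delta$ denotes the $n$-fold sumset $\{\delta_1 + \dots + \delta_n \mid \delta_1, \dots, \delta_n \in \Delta\}$. *)

(* Defs.v *)
From HB Require Import structures.
From mathcomp Require Import all_boot all_order all_algebra all_fingroup all_solvable all_field all_character.
Set Implicit Arguments. Unset Strict Implicit. Unset Printing Implicit Defensive.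
Import GRing.Theory.
Local Open Scope ring_scope.

Fixpoint sumset (V : finZmodType) (n : nat) (D : {set V}) : {set V} :=
  match n with
  | 0 => [set 0]
  | n'.+1 => [set x + y | x in D, y in sumset n' D]
  end.

Definition line (F : finFieldType) (d : nat) (b v : 'rV[F]_d) : {set 'rV[F]_d} :=
  [set b + lam *: v | lam : F].

(* Main.v *)
Require Import Defs.
From HB Require Import structures.
From mathcomp Require Import all_boot all_order all_algebra all_fingroup all_solvable all_field all_character.
Local Open Scope ring_scope.
Import GRing.Theory.

Lemma sumset_add (V : finZmodType) (D : {set V}) a c x y :
  x \in sumset a D -> y \in sumset c D -> x + y \in sumset (a + c) D.
Proof.
elim: a x => [|a IH] x /=.
  by rewrite inE => /eqP -> yc; rewrite add0r.
case/imset2P => x1 x2 h1 h2 -> yc; rewrite -addrA.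
by apply/imset2P; exists x1 (x2 + y) => //; apply: IH.
Qed.

Theorem lemma2p1 (p : nat) (hp : prime p) (d : nat) (hd : (0 < d)%N)
  (gT : finGroupType) (G : {group gT}) (rG : mx_representation 'F_p G d)
  (hfaith : mx_faithful rG) (hirr : mx_irreducible rG)
  (Delta : {set 'rV['F_p]_d})
  (hinv : forall g, g \in G -> forall x, x \in Delta -> x *m rG g \in Delta)
  (m : nat) (hm : (0 < m)%N) (b v : 'rV['F_p]_d) (hv : v != 0)
  (hline : line b v \subset sumset m Delta) :
  sumset (d * m) Delta = [set: 'rV['F_p]_d].
Proof.
have sinv : forall n g x, g \in G -> x \in sumset n Delta -> x *m rG g \in sumset n Delta.
  move=> n g x Gg; elim: n x => [|n IH] x /=.
    by rewrite !inE => /eqP ->; rewrite mul0mx.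
  case/imset2P => x1 x2 h1 h2 ->; rewrite mulmxDl.
  by apply/imset2P; exists (x1 *m rG g) (x2 *m rG g) => //; [apply: hinv | apply: IH].
have escape : forall W : 'M['F_p]_d, (\rank W < d)%N ->
    exists2 g, g \in G & ~~ (v *m rG g <= W)%MS.
  move=> W hW; have [g /andP[Gg hg]|hall0] := pickP [pred g | (g \in G) && ~~ (v *m rG g <= W)%MS].
    by exists g.
  have hall : forall g, g \in G -> (v *m rG g <= W)%MS.
    by move=> g Gg; have := hall0 g; rewrite /= Gg /= => /negbFE.
  exfalso; move: hW; apply/negP; rewrite -leqNgt.
  pose U := (\sum_(g in G) <<v *m rG g>>)%MS.
  have modU : mxmodule rG U.
    apply/mxmoduleP => x Gx; rewrite (sumsmxMr _ _ _).
    apply/sumsmx_subP => g Gg; rewrite (eqmxMr _ (genmxE _)) -mulmxA -repr_mxM //.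
    by apply: (sumsmx_sup (g * x)%g); rewrite ?groupM // genmxE.
  have vU : (v <= U)%MS.
    by apply: (sumsmx_sup 1%g) => //; rewrite repr_mx1 mulmx1 genmxE.
  have nzU : U != 0.
    by apply: contraNneq hv => U0; move: vU; rewrite U0 submx0.
  have fU := (proj2 (proj1 (mx_irrP rG) hirr)) U modU nzU.
  have : (U <= W)%MS.
    apply/sumsmx_subP => g Gg; rewrite genmxE.
    exact: hall.
  move=> UW; move/eqP: fU => hr; rewrite -[X in (X <= _)%N]hr; exact: mxrankS.
have main : forall k, (k <= d)%N -> exists c : 'rV['F_p]_d, exists W : 'M['F_p]_d,
    \rank W = k /\ forall w, (w <= W)%MS -> c + w \in sumset (k * m) Delta.
  elim => [|k IH] hk.
    exists 0, 0; split; first by rewrite mxrank0.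
    by move=> w; rewrite submx0 => /eqP ->; rewrite addr0 mul0n inE.
  have [c [W [rW hW]]] := IH (ltnW hk).
  have hlt : (\rank W < d)%N by rewrite rW.
  have [g Gg ng] := escape W hlt.
  exists (c + b *m rG g), (W + v *m rG g)%MS; split.
    apply/eqP; rewrite eqn_leq; apply/andP; split.
      apply: leq_trans (mxrank_adds_leqif W (v *m rG g)).1 _.
      by rewrite rW -[X in (_ <= X)%N]addn1 leq_add2l rank_leq_row.
    rewrite -rW; apply: rank_ltmx; rewrite ltmxE addsmxSl /=.
    by apply: contra ng => h; exact: submx_trans (addsmxSr _ _) h.
  move=> w /sub_addsmxP [[u1 u2] /= ->].
  rewrite [u2]mx11_scalar mul_scalar_mx.
  have -> : c + b *m rG g + (u1 *m W + u2 0 0 *: (v *m rG g))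
      = (b + u2 0 0 *: v) *m rG g + (c + u1 *m W).
    by rewrite mulmxDl -scalemxAl addrACA addrC.
  rewrite mulSn; apply: sumset_add; last by apply: hW; exact: submxMl.
  apply: sinv => //; apply: (subsetP hline).
  by apply/imsetP; exists (u2 0 0).
have [c [W [rW hW]]] := main d (leqnn d).
apply/setP => x; rewrite inE.
have -> : x = c + (x - c) by rewrite addrC subrK.
apply: hW.
by apply: submx_full; rewrite /row_full rW.
Qed.
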